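(* In the setting below, $$\mathrm{Syl}_B(J)\cdot\begin{pmatrix}\mathfrak{M}_B(\mathbf{y})\\ \mathfrak{R}_B(\mathbf{y})\end{pmatrix}=[\mathrm{Tr}(b_ib_j)]_{i,j=1}^N.$$
   Context: Setting: $\mathbb{K}$ algebraically closed, $\mathbf{x}=(x_1,\ldots,x_m)$, $f_1,\ldots,f_s\in\mathbb{K}[\mathbf{x}]$ of degrees $d_i$, $\mathcal{I}=\langle f_1,\ldots,f_s\rangle$, $\mathcal{A}=\mathbb{K}[\mathbf{x}]/\mathcal{I}$ finite dimensional of dimension $N$. $\mathbb{K}[\mathbf{x}]_k$ = polynomials of total degree $\le k$; $\langle f_1,\ldots,f_s\rangle_d:=\{\sum_i q_if_i:\deg q_i\le d-d_i\}$; $\mathrm{Mon}_\le(\Delta)$ = monomials of degree $\le\Delta$. $B=[b_1,\ldots,b_N]$ are monomials $b_i=\mathbf{x}^{\alpha_i}$ of degree $\le D$ whose classes form a basis of $\mathcal{A}$, and $\Delta\ge2D$ is such that their classes also form a basis of $\mathbb{K}[\mathbf{x}]_\Delta/(\langle f_1,\ldots,f_s\rangle_{\Delta+1}\cap\mathbb{K}[\mathbf{x}]_\Delta)$. $\mathrm{Mac}_\Delta(\mathbf{f})$ is a matrix whose rows are the coefficient vectors (w.r.t. $\mathrm{Mon}_\le(\Delta)$) of a basis of $\langle f_1,\ldots,f_s\rangle_{\Delta+1}\cap\mathbb{K}[\mathbf{x}]_\Delta$, with columns indexed by $\mathrm{Mon}_\le(\Delta)$, the monomials of $B$ first. Fix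 $\mathbf{y}=(y_\alpha)_{|\alpha|\le\Delta}$ with $\mathrm{Mac}_\Delta(\mathbf{f})\mathbf{y}=0$ such that the moment matrix $\mathfrak{M}_B(\mathbf{y})=[y_{\alpha_i+\alpha_j}]_{i,j=1}^N$ is invertible. $\mathfrak{R}_B(\mathbf{y})$ is the unique matrix with rows indexed by $\mathrm{Mon}_\le(\Delta)\setminus B$ and columns by $B$ such that $\mathrm{Mac}_\Delta(\mathbf{f})\cdot\binom{\mathfrak{M}_B(\mathbf{y})}{\mathfrak{R}_B(\mathbf{y})}=0$ (rows of the stacked matrix ordered as the columns of $\mathrm{Mac}_\Delta(\mathbf{f})$). Write $\mathfrak{M}_B(\mathbf{y})^{-1}=[c_{ij}]$, $b_i^*:=\sum_{j}c_{ji}b_j$, and let $J$ be the unique element of $\mathrm{span}(b_1,\ldots,b_N)$ congruent to $\sum_i b_ib_i^*$ modulo $\mathcal{I}$ (so $\deg J\le D$). $\mathrm{Syl}_B(J)$ is the $N\times|\mathrm{Mon}_\le(\Delta)|$ matrix whose $i$-th row is the coefficient vector of the polynomial $b_iJ$ (of degree $\le 2D\le\Delta$) with respect to $\mathrm{Mon}_\le(\Delta)$, columns ordered as in $\mathrm{Mac}_\Delta(\mathbf{f})$. $\mathrm{Tr}(h)$ is the trace of the multiplication map $g\mapsto hg$ on $\mathcal{A}$. *)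

(* Defs.v *)
From HB Require Import structures.
From mathcomp Require Import all_boot all_order all_algebra.
From mathcomp Require Export mpoly.
Set Implicit Arguments. Unset Strict Implicit. Unset Printing Implicit Defensive.
Import Order.TTheory GRing.Theory.
Local Open Scope ring_scope.

Section Defs.
Variables (K : fieldType) (m s : nat) (f : 'I_s -> {mpoly K[m]}).

(* total degree of a polynomial (the degree of 0 is taken to be 0 here;
   it is only used for the generators f_i) *)
Definition tdeg (p : {mpoly K[m]}) : nat := (msize p).-1.

(* deg p <= k  (with deg 0 = -oo):  msize p = 1 + deg p, msize 0 = 0 *)
Definition deg_le (p : {mpoly K[m]}) (k : nat) : bool := (msize p <= k.+1)%N.

Definition in_ideal (p : {mpoly K[m]}) : Prop :=
  exists q : 'I_s -> {mpoly K[m]}, p = \sum_(i < s) q i * f i.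

(* membership in <f_1,...,f_s>_d = { sum q_i f_i : deg q_i <= d - d_i }
   (deg q_i <= d - d_i, with deg 0 = -oo, is  msize q_i <= d + 1 - d_i) *)
Definition in_ideal_deg (d : nat) (p : {mpoly K[m]}) : Prop :=
  exists q : 'I_s -> {mpoly K[m]},
    (forall i, (msize (q i) <= d.+1 - tdeg (f i))%N) /\
    p = \sum_(i < s) q i * f i.

Definition in_L (Delta : nat) (p : {mpoly K[m]}) : Prop :=
  in_ideal_deg Delta.+1 p /\ deg_le p Delta.

Definition basis_quotient (N : nat) (b : 'I_N -> {mpoly K[m]}) : Prop :=
  (forall p, exists c : 'I_N -> K, in_ideal (p - \sum_(i < N) c i *: b i)) /\
  (forall c : 'I_N -> K, in_ideal (\sum_(i < N) c i *: b i) -> forall i, c i = 0).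

Definition basis_trunc_quotient (Delta N : nat) (b : 'I_N -> {mpoly K[m]}) : Prop :=
  (forall p, deg_le p Delta ->
     exists c : 'I_N -> K, in_L Delta (p - \sum_(i < N) c i *: b i)) /\
  (forall c : 'I_N -> K, in_L Delta (\sum_(i < N) c i *: b i) -> forall i, c i = 0).

(* T is the matrix (in the basis b, row convention) of the multiplication map
   g |-> h g on A = K[x]/I : h b_k = sum_l T k l b_l  mod I *)
Definition mult_matrix (N : nat) (b : 'I_N -> {mpoly K[m]}) (h : {mpoly K[m]})
  (T : 'M[K]_N) : Prop :=
  forall k, in_ideal (h * b k - \sum_(l < N) T k l *: b l).

End Defs.

Section MacDefs.
Variables (K : fieldType) (m Delta N : nat) (alpha : 'I_N -> 'X_{1..m}).

Definition Mon := 'X_{1..m < Delta.+1}.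

Definition bmon (i : 'I_N) : {mpoly K[m]} := 'X_[alpha i].

Definition row_poly (v : Mon -> K) : {mpoly K[m]} :=
  \sum_(g : Mon) v g *: 'X_[(g : 'X_{1..m})].

Definition moment_mx (y : 'X_{1..m} -> K) : 'M[K]_N :=
  \matrix_(i, j) y (alpha i + alpha j)%MM.

(* the stacked matrix (M_B(y) ; R_B(y)), rows indexed by Mon_<=(Delta):
   the row of the monomial alpha_k is row k of M_B(y); any other monomial
   gamma gets the row gamma of R (rows of R at monomials of B are unused) *)
Definition stacked (MB : 'M[K]_N) (R : Mon -> 'I_N -> K) (g : Mon) (j : 'I_N) : K :=
  match [pick k | alpha k == (g : 'X_{1..m})] with
  | Some k => MB k j
  | None => R g j
  end.

Definition bstar (MB : 'M[K]_N) (i : 'I_N) : {mpoly K[m]} :=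
  \sum_(j < N) (invmx MB) j i *: bmon j.

Definition syl_stacked (J : {mpoly K[m]}) (MB : 'M[K]_N) (R : Mon -> 'I_N -> K)
  (i j : 'I_N) : K :=
  \sum_(g : Mon) (bmon i * J)@_(g : 'X_{1..m}) * stacked MB R g j.

End MacDefs.

(* Main.v *)
Require Import Defs.
From HB Require Import structures.
From mathcomp Require Import all_boot all_order all_algebra.
From mathcomp Require Import mpoly.
From Stdlib Require Import ClassicalEpsilon.
From mathcomp Require Import ring.
Import GRing.Theory.
Local Open Scope ring_scope.
Set Implicit Arguments. Unset Strict Implicit.

Section Ideal.
Variables (K : fieldType) (m s : nat) (f : 'I_s -> {mpoly K[m]}).

Lemma ideal0 : in_ideal f 0.
Proof. by exists (fun _ => 0); rewrite big1 // => i _; rewrite mul0r. Qed.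

Lemma idealD p q : in_ideal f p -> in_ideal f q -> in_ideal f (p + q).
Proof.
move=> [a ->] [b ->]; exists (fun i => a i + b i).
by rewrite -big_split /=; apply: eq_bigr => i _; rewrite mulrDl.
Qed.

Lemma idealN p : in_ideal f p -> in_ideal f (- p).
Proof.
move=> [a ->]; exists (fun i => - a i).
by rewrite -sumrN; apply: eq_bigr => i _; rewrite mulNr.
Qed.

Lemma idealM q p : in_ideal f p -> in_ideal f (q * p).
Proof.
move=> [a ->]; exists (fun i => q * a i).
by rewrite mulr_sumr; apply: eq_bigr => i _; rewrite mulrA.
Qed.

Lemma idealZ c p : in_ideal f p -> in_ideal f (c *: p).
Proof. by move=> h; rewrite -mul_mpolyC; apply: idealM. Qed.

Lemma idealB p q : in_ideal f p -> in_ideal f q -> in_ideal f (p - q).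
Proof. by move=> hp hq; apply: idealD => //; apply: idealN. Qed.

Lemma ideal_sum (I : finType) (F : I -> {mpoly K[m]}) :
  (forall i, in_ideal f (F i)) -> in_ideal f (\sum_i F i).
Proof.
move=> h; elim/big_rec: _; first exact: ideal0.
by move=> i x _ hx; apply: idealD.
Qed.

Lemma ideal_eq p q : p = q -> in_ideal f p -> in_ideal f q.
Proof. by move->. Qed.

Lemma L_ideal D p : in_L f D p -> in_ideal f p.
Proof. by move=> [[q [_ ->]] _]; exists q. Qed.

End Ideal.

Section Ell.
Variables (K : fieldType) (m s : nat) (f : 'I_s -> {mpoly K[m]}).
Variables (N : nat) (b : 'I_N -> {mpoly K[m]}) (HA : basis_quotient f b).
Variable (w : 'I_N -> K).

Definition crd (p : {mpoly K[m]}) : 'I_N -> K :=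
  proj1_sig (constructive_indefinite_description _ (proj1 HA p)).

Lemma crdP p : in_ideal f (p - \sum_(i < N) crd p i *: b i).
Proof. exact: (proj2_sig (constructive_indefinite_description _ (proj1 HA p))). Qed.

Definition ell p := \sum_(k < N) crd p k * w k.

Lemma ell_char p c : in_ideal f (p - \sum_(i < N) c i *: b i) -> ell p = \sum_(k < N) c k * w k.
Proof.
move=> hc.
have h : in_ideal f (\sum_(i < N) (c i - crd p i) *: b i).
  apply: ideal_eq (idealB (crdP p) hc).
  rewrite (eq_bigr _ (fun i _ => scalerBl _ _ _)) sumrB; ring.
have e := proj2 HA _ h.
by apply: eq_bigr => k _; have /eqP := e k; rewrite subr_eq0 => /eqP ->.
Qed.

Lemma ell_ideal p q : in_ideal f (p - q) -> ell p = ell q.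
Proof.
move=> h; apply: ell_char.
apply: ideal_eq (idealD h (crdP q)); by rewrite addrA subrK.
Qed.

Lemma ell_lin (a : 'I_N -> K) (P : 'I_N -> {mpoly K[m]}) :
  ell (\sum_(k < N) a k *: P k) = \sum_(k < N) a k * ell (P k).
Proof.
rewrite /ell.
have -> : \sum_(k < N) a k * (\sum_(l < N) crd (P k) l * w l)
       = \sum_(l < N) (\sum_(k < N) a k * crd (P k) l) * w l.
  rewrite (eq_bigr (fun k => \sum_(l < N) a k * (crd (P k) l * w l))); last by move=> k _; rewrite mulr_sumr.
  rewrite exchange_big /=; apply: eq_bigr => l _; rewrite mulr_suml.
  by apply: eq_bigr => k _; rewrite mulrA.
apply: ell_char.
apply: ideal_eq (@ideal_sum _ _ _ f _ (fun k => a k *: (P k - \sum_(i < N) crd (P k) i *: b i)) (fun k => idealZ (a k) (crdP (P k)))).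
rewrite (eq_bigr (fun k => a k *: P k - a k *: \sum_(i < N) crd (P k) i *: b i)); last by move=> k _; rewrite scalerBr.
rewrite sumrB; congr (_ - _).
rewrite (eq_bigr (fun k => \sum_(l < N) (a k * crd (P k) l) *: b l)); last first.
  by move=> k _; rewrite scaler_sumr; apply: eq_bigr => l _; rewrite scalerA.
rewrite exchange_big /=; apply: eq_bigr => l _; by rewrite scaler_suml.
Qed.

End Ell.

Section Psi.
Variables (K : fieldType) (m Delta : nat).

Definition psi (w : Mon m Delta -> K) (p : {mpoly K[m]}) :=
  \sum_(g : Mon m Delta) p@_(g : 'X_{1..m}) * w g.

Lemma psi_lin (I : finType) w (a : I -> K) (P : I -> {mpoly K[m]}) :
  psi w (\sum_k a k *: P k) = \sum_k a k * psi w (P k).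
Proof.
rewrite /psi (eq_bigr (fun g : Mon m Delta => \sum_k a k * ((P k)@_(g : 'X_{1..m}) * w g))).
  by rewrite exchange_big /=; apply: eq_bigr => k _; rewrite mulr_sumr.
move=> g _; rewrite raddf_sum mulr_suml; apply: eq_bigr => k _ /=. 
by rewrite mulrA -(mcoeffZ (a k) (P k) g).
Qed.

Lemma psiB w p q : psi w (p - q) = psi w p - psi w q.
Proof.
rewrite /psi -sumrB; apply: eq_bigr => g _; by rewrite mcoeffB mulrBl.
Qed.

Lemma row_coeff (v : Mon m Delta -> K) (g : Mon m Delta) :
  (row_poly v)@_(g : 'X_{1..m}) = v g.
Proof.
rewrite /row_poly raddf_sum (bigD1 g) //= big1 ?addr0.
  by rewrite mcoeffZ mcoeffX eqxx mulr1.
move=> g' ne; rewrite mcoeffZ mcoeffX.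
suff -> : ((g' : 'X_{1..m}) == g) = false by rewrite mulr0.
by apply/negbTE; rewrite -bmeqP.
Qed.

Lemma psi_row w v : psi w (row_poly v) = \sum_g v g * w g.
Proof. by apply: eq_bigr => g _; rewrite row_coeff. Qed.

Lemma psi_X w (beta : 'X_{1..m}) (H : (mdeg beta < Delta.+1)%N) :
  psi w 'X_[beta] = w (BMultinom H).
Proof.
rewrite /psi (bigD1 (BMultinom H)) //= mcoeffX eqxx mul1r big1 ?addr0 //.
move=> g ne; rewrite mcoeffX.
suff -> : (beta == (g : 'X_{1..m})) = false by rewrite mul0r.
apply/negbTE; apply: contra ne => /eqP e; apply/eqP/val_inj => /=. by rewrite e.
Qed.

Variables (s : nat) (f : 'I_s -> {mpoly K[m]}) (r : nat) (Mac : 'I_r -> Mon m Delta -> K).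
Hypothesis HMac_span : forall p, in_L f Delta p ->
      exists a : 'I_r -> K, p = \sum_(k < r) a k *: row_poly (Mac k).

Lemma psi_L w : (forall k, \sum_g Mac k g * w g = 0) ->
  forall p, in_L f Delta p -> psi w p = 0.
Proof.
move=> hw p /HMac_span [a ->]; rewrite psi_lin big1 // => k _.
by rewrite psi_row hw mulr0.
Qed.

End Psi.
Lemma deg_le_sum (K : fieldType) m (I : finType) (a : I -> K) (P : I -> {mpoly K[m]}) d :
  (forall k, deg_le (P k) d) -> deg_le (\sum_k a k *: P k) d.
Proof.
move=> h; rewrite /deg_le; elim/big_ind: _ => //.
- by rewrite msize0.
- move=> x y hx hy; apply: leq_trans (msizeD_le _ _) _; by rewrite geq_max hx hy.
- by move=> k _; apply: leq_trans (msizeZ_le _ _) (h k).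
Qed.

Theorem theorem3p3
  (K : closedFieldType) (m s : nat) (f : 'I_s -> {mpoly K[m]})
  (N D Delta : nat) (alpha : 'I_N -> 'X_{1..m})
  (Hdeg : forall i, (mdeg (alpha i) <= D)%N)
  (HbasisA : basis_quotient f (bmon K alpha))
  (HDelta : (2 * D <= Delta)%N)
  (HbasisT : basis_trunc_quotient f Delta (bmon K alpha))
  (r : nat) (Mac : 'I_r -> Mon m Delta -> K)
  (HMac_in : forall k, in_L f Delta (row_poly (Mac k)))
  (HMac_free : forall a : 'I_r -> K,
      \sum_(k < r) a k *: row_poly (Mac k) = 0 -> forall k, a k = 0)
  (HMac_span : forall p, in_L f Delta p ->
      exists a : 'I_r -> K, p = \sum_(k < r) a k *: row_poly (Mac k))
  (y : 'X_{1..m} -> K)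
  (Hy : forall k, \sum_(g : Mon m Delta) Mac k g * y (g : 'X_{1..m}) = 0)
  (HMB : moment_mx alpha y \in unitmx)
  (R : Mon m Delta -> 'I_N -> K)
  (HR : forall k j,
      \sum_(g : Mon m Delta) Mac k g * stacked alpha (moment_mx alpha y) R g j = 0)
  (cJ : 'I_N -> K)
  (HJ : in_ideal f (\sum_(k < N) cJ k *: bmon K alpha k
                    - \sum_(i < N) bmon K alpha i * bstar alpha (moment_mx alpha y) i)) :
  forall (i j : 'I_N) (T : 'M[K]_N),
    mult_matrix f (bmon K alpha) (bmon K alpha i * bmon K alpha j) T ->
    syl_stacked alpha (\sum_(k < N) cJ k *: bmon K alpha k)
                (moment_mx alpha y) R i j = \tr T.
Proof.
move=> i j T HT.
set b := bmon K alpha.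
set M := moment_mx alpha y.
set J := \sum_(k < N) cJ k *: b k.
pose w k := y (alpha k).
pose l := ell HbasisA w.
pose wy := fun g : Mon m Delta => y (g : 'X_{1..m}).
have hD : (D <= Delta)%N by apply: leq_trans HDelta; rewrite leq_pmull.
have Hlt1 k : (mdeg (alpha k) < Delta.+1)%N by rewrite ltnS (leq_trans (Hdeg k)).
have Hlt2 (k k' : 'I_N) : (mdeg (alpha k + alpha k')%MM < Delta.+1)%N.
  by rewrite ltnS mdegD (leq_trans _ HDelta) // mul2n -addnn leq_add.
have Hbb k k' : b k * b k' = 'X_[alpha k + alpha k'] by rewrite /b /bmon mpolyXD.
have Hdl2 k k' : deg_le (b k * b k') Delta by rewrite Hbb /deg_le msizeX.
have F1 p : deg_le p Delta -> l p = psi wy p.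
  move=> /(proj1 HbasisT) [c hc].
  have := psi_L HMac_span Hy hc; rewrite psiB => /eqP; rewrite subr_eq0 => /eqP ->.
  rewrite /l (ell_char HbasisA w (L_ideal hc)) psi_lin; apply: eq_bigr => k _.
  by rewrite /b /bmon (psi_X _ (Hlt1 k)).
have F2 (k k' : 'I_N) : y (alpha k + alpha k')%MM = l (b k * b k').
  by rewrite F1 // Hbb (psi_X _ (Hlt2 k k')).
have F3 k : psi (fun g => stacked alpha M R g j) (b k) = M k j.
  rewrite /b /bmon (psi_X _ (Hlt1 k)) /stacked /=.
  case: pickP => [k' /eqP e | /(_ k)]; last by rewrite eqxx.
  by rewrite /M !mxE e.
have -> : syl_stacked alpha J M R i j = psi (fun g => stacked alpha M R g j) (b i * J) by [].
set P := b i * J.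
have PE : P = \sum_(k < N) cJ k *: (b i * b k).
  by rewrite /P /J mulr_sumr; apply: eq_bigr => k _; rewrite scalerAr.
have [c hc] := proj1 HbasisT P (ltac:(rewrite PE; apply: deg_le_sum => k; exact: Hdl2)).
have := psi_L HMac_span (HR^~ j) hc; rewrite psiB => /eqP; rewrite subr_eq0 => /eqP ->.
rewrite psi_lin.
have -> : \sum_(k < N) c k * psi (fun g => stacked alpha M R g j) (b k)
        = l (P * b j).
  rewrite /l (ell_ideal (q := \sum_(k < N) c k *: (b k * b j)) HbasisA w); last first.
    apply: ideal_eq (idealM (b j) (L_ideal hc)).
    rewrite mulrBr mulrC; congr (_ - _); rewrite mulr_sumr; apply: eq_bigr => k _; by rewrite -scalerAr mulrC.
  rewrite (ell_lin HbasisA w c (fun k => b k * b j)); apply: eq_bigr => k _.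
  by rewrite F3 /M mxE F2.
set h := b i * b j.
set C := invmx M.
have MC : M *m C = 1%:M by rewrite mulmxV.
have Tr : \tr T = \sum_(k < N) \sum_(mm < N) C mm k * l (h * b k * b mm).
  rewrite /mxtrace; apply: eq_bigr => k _.
  have -> : T k k = (T *m (M *m C)) k k by rewrite MC mulmx1.
  rewrite mulmxA mxE; apply: eq_bigr => mm _; rewrite mulrC; congr (_ * _).
  rewrite mxE.
  rewrite /l (ell_ideal (q := \sum_(l0 < N) T k l0 *: (b l0 * b mm)) HbasisA w); last first.
    apply: ideal_eq (idealM (b mm) (HT k)).
    rewrite mulrBr mulrC; congr (_ - _); rewrite mulr_sumr; apply: eq_bigr => l0 _.
    by rewrite -scalerAr mulrC.
  rewrite (ell_lin HbasisA w (T k) (fun l0 => b l0 * b mm)); apply: eq_bigr => l0 _.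
  by rewrite /M mxE F2.
rewrite Tr.
have -> : \sum_(k < N) \sum_(mm < N) C mm k * l (h * b k * b mm)
    = l (\sum_(k < N) 1 *: \sum_(mm < N) C mm k *: (h * b k * b mm)).
  rewrite /l (ell_lin HbasisA w (fun _ => 1)); apply: eq_bigr => k _.
  by rewrite mul1r (ell_lin HbasisA w (fun mm => C mm k)).
rewrite /l; apply: (ell_ideal HbasisA w).
apply: ideal_eq (idealM h HJ).
rewrite mulrBr; congr (_ - _).
  by rewrite /P /h mulrAC.
rewrite mulr_sumr; apply: eq_bigr => k _.
rewrite scale1r /bstar mulrA mulr_sumr; apply: eq_bigr => mm _.
by rewrite -scalerAr.
Qed.
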